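(* ${\bf KT^\boxdot}$ is sound and strongly complete with respect to the class of reflexive bimodal frames (both $R_1$ and $R_2$ reflexive), and also with respect to the class of bimodal frames $\langle S,R_1,R_2\rangle$ in which at least one of $R_1,R_2$ is reflexive.
   Context: Fix a nonempty set $\mathbf{P}$ of propositional variables. A bimodal model is $\langle S,R_1,R_2,V\rangle$ with $S$ nonempty, $R_1,R_2\subseteq S\times S$, $V:\mathbf{P}\to\mathcal{P}(S)$. $\mathcal{L}(\boxdot):\ \phi::=p\mid\neg\phi\mid(\phi\wedge\phi)\mid\boxdot\phi$. Truth: $\mathcal{M},s\vDash\boxdot\phi$ iff for all $t,u$ with $sR_1t$ and $sR_2u$, ($\mathcal{M},t\vDash\phi\iff\mathcal{M},u\vDash\phi$); atoms and Booleans as usual. ${\bf K^\boxdot}$ has axioms: all instances of propositional tautologies; $\boxdot\top$; $\boxdot\phi\leftrightarrow\boxdot\neg\phi$; $\boxdot\phi\wedge\boxdot\psi\to\boxdot(\phi\wedge\psi)$; $\boxdot\phi\to\boxdot(\phi\vee\psi)\vee\boxdot(\neg\phi\vee\chi)$; and rules: modus ponens and RE: from $\phi\leftrightarrow\psi$ infer $\boxdot\phi\leftrightarrow\boxdot\psi$. ${\bf KT^\boxdot}$ is ${\bf K^\boxdot}$ plus the axiom schema $\phi\to[\boxdot\phi\to(\boxdot(\phi\to\psi)\to\boxdot\psi)]$. Sound and strongly complete w.r.t. a class $\mathbb{C}$ of frames means: $\Gamma\vdash\phi$ iff $\phi$ is true at every state of every model based on a frame in $\mathbb{C}$ at which all of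 $\Gamma$ is true. *)

(* Defs.v *)
From Stdlib Require Import List.
Import ListNotations.

Set Implicit Arguments.

Inductive form (P : Type) : Type :=
| Var : P -> form P
| Neg : form P -> form P
| And : form P -> form P -> form P
| Dot : form P -> form P.

Arguments Var {P} _.
Arguments Neg {P} _.
Arguments And {P} _ _.
Arguments Dot {P} _.

Definition Or {P} (a b : form P) : form P := Neg (And (Neg a) (Neg b)).
Definition Imp {P} (a b : form P) : form P := Neg (And a (Neg b)).
Definition Iff {P} (a b : form P) : form P := And (Imp a b) (Imp b a).
(* T is the abbreviation  ~(p0 /\ ~p0)  for a fixed variable p0 (P nonempty). *)
Definition Top {P} (p0 : P) : form P := Neg (And (Var p0) (Neg (Var p0))).

(* Propositional tautologies: boxdot-formulas are treated as atoms. *)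
Fixpoint beval {P} (f : P -> bool) (g : form P -> bool) (phi : form P) : bool :=
  match phi with
  | Var p => f p
  | Neg a => negb (beval f g a)
  | And a b => andb (beval f g a) (beval f g b)
  | Dot a => g (Dot a)
  end.

Definition tautology {P} (phi : form P) : Prop :=
  forall f g, beval f g phi = true.

Inductive KTthm {P} (p0 : P) : form P -> Prop :=
| ax_taut phi : tautology phi -> KTthm p0 phi
| ax_top : KTthm p0 (Dot (Top p0))
| ax_neg phi : KTthm p0 (Iff (Dot phi) (Dot (Neg phi)))
| ax_and phi psi : KTthm p0 (Imp (And (Dot phi) (Dot psi)) (Dot (And phi psi)))
| ax_or phi psi chi :
    KTthm p0 (Imp (Dot phi) (Or (Dot (Or phi psi)) (Dot (Or (Neg phi) chi))))
| ax_T phi psi :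
    KTthm p0 (Imp phi (Imp (Dot phi) (Imp (Dot (Imp phi psi)) (Dot psi))))
| rule_mp phi psi : KTthm p0 (Imp phi psi) -> KTthm p0 phi -> KTthm p0 psi
| rule_RE phi psi : KTthm p0 (Iff phi psi) -> KTthm p0 (Iff (Dot phi) (Dot psi)).

Fixpoint conj {P} (p0 : P) (l : list (form P)) : form P :=
  match l with
  | [] => Top p0
  | a :: l' => And a (conj p0 l')
  end.

Definition KTderives {P} (p0 : P) (Gamma : form P -> Prop) (phi : form P) : Prop :=
  exists l : list (form P),
    (forall g, In g l -> Gamma g) /\ KTthm p0 (Imp (conj p0 l) phi).

Fixpoint sat {P} {S : Type} (R1 R2 : S -> S -> Prop) (V : P -> S -> Prop)
  (s : S) (phi : form P) : Prop :=
  match phi with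
  | Var p => V p s
  | Neg a => ~ sat R1 R2 V s a
  | And a b => sat R1 R2 V s a /\ sat R1 R2 V s b
  | Dot a => forall t u, R1 s t -> R2 s u ->
               (sat R1 R2 V t a <-> sat R1 R2 V u a)
  end.

Definition frame_class : Type :=
  forall S : Type, (S -> S -> Prop) -> (S -> S -> Prop) -> Prop.

Definition sem_conseq {P} (C : frame_class) (Gamma : form P -> Prop) (phi : form P) : Prop :=
  forall (S : Type) (R1 R2 : S -> S -> Prop) (V : P -> S -> Prop) (s : S),
    C S R1 R2 ->
    (forall g, Gamma g -> sat R1 R2 V s g) ->
    sat R1 R2 V s phi.

Definition sound_strongly_complete {P} (p0 : P) (C : frame_class) : Prop :=
  forall (Gamma : form P -> Prop) (phi : form P),
    KTderives p0 Gamma phi <-> sem_conseq C Gamma phi.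

Definition reflexive {S : Type} (R : S -> S -> Prop) : Prop := forall s, R s s.

Definition both_reflexive : frame_class :=
  fun S R1 R2 => reflexive R1 /\ reflexive R2.

Definition one_reflexive : frame_class :=
  fun S R1 R2 => reflexive R1 \/ reflexive R2.

(* Main.v *)
Require Import Defs.
From Stdlib Require Import List Classical ClassicalEpsilon.
From mathcomp Require classical_sets.
Import ListNotations.

Section Proof.
Context {P : Type} (p0 : P).
Notation F := (form P).
Notation thm := (KTthm p0).

Ltac taut := intros ff gg; unfold Imp, Iff, Or, Top in *; simpl;
  repeat match goal with |- context [beval ff gg ?x] =>
    let e := fresh in destruct (beval ff gg x) eqn:e
  | |- context [ff ?x] => destruct (ff x)
  | |- context [gg ?x] => destruct (gg x) end; try reflexivity;
  simpl in *; try discriminate.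

Lemma mp1 a b : tautology (Imp a b) -> thm a -> thm b.
Proof. intros T H. exact (rule_mp (ax_taut p0 T) H). Qed.
Lemma mp2 a b c : tautology (Imp a (Imp b c)) -> thm a -> thm b -> thm c.
Proof. intros T H1 H2. exact (rule_mp (rule_mp (ax_taut p0 T) H1) H2). Qed.
Lemma mp3 a b c d : tautology (Imp a (Imp b (Imp c d))) -> thm a -> thm b -> thm c -> thm d.
Proof. intros T H1 H2 H3. exact (rule_mp (rule_mp (rule_mp (ax_taut p0 T) H1) H2) H3). Qed.

Lemma conj_app l1 l2 : thm (Imp (conj p0 (l1 ++ l2)) (And (conj p0 l1) (conj p0 l2))).
Proof.
  induction l1 as [|a l1 IH]; simpl.
  - apply ax_taut; taut.
  - eapply mp1; [|exact IH]. taut.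
Qed.

Lemma split_list (G : F -> Prop) psi l :
  (forall g, In g l -> G g \/ g = psi) ->
  exists l', (forall g, In g l' -> G g) /\ thm (Imp (And psi (conj p0 l')) (conj p0 l)).
Proof.
  induction l as [|a l IH]; intros Hl.
  - exists []. split; [simpl; tauto|]. apply ax_taut; simpl; taut.
  - destruct IH as [l' [H1 H2]]. { intros g Hg; apply Hl; simpl; auto. }
    destruct (Hl a (or_introl eq_refl)) as [Ga|Ea]; [|subst a].
    + exists (a :: l'). split. { intros g [Eg|Hg]; [subst g|]; auto. }
      simpl. eapply mp1; [|exact H2]. taut.
    + exists l'. split; auto. simpl. eapply mp1; [|exact H2]. taut.
Qed.

Definition cons_ (X : F -> Prop) : Prop :=
  ~ exists l, (forall g, In g l -> X g) /\ thm (Neg (conj p0 l)).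

Lemma cons_mono (X Y : F -> Prop) : (forall x, X x -> Y x) -> cons_ Y -> cons_ X.
Proof. intros H C [l [H1 H2]]. apply C. exists l. split; auto. Qed.

Lemma incons_add (X : F -> Prop) psi :
  ~ cons_ (fun x => X x \/ x = psi) ->
  exists l, (forall g, In g l -> X g) /\ thm (Imp (conj p0 l) (Neg psi)).
Proof.
  intros H. apply NNPP in H. destruct H as [l [H1 H2]].
  destruct (split_list X psi l H1) as [l' [H3 H4]].
  exists l'. split; auto. eapply mp2; [|exact H4|exact H2]. taut.
Qed.

Definition MCS (M : F -> Prop) : Prop :=
  cons_ M /\ forall phi, cons_ (fun x => M x \/ x = phi) -> M phi.

Lemma subl_app (X : F -> Prop) l1 l2 :
  (forall g, In g l1 -> X g) -> (forall g, In g l2 -> X g) -> forall g, In g (l1 ++ l2) -> X g.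
Proof. intros H1 H2 g Hg. apply in_app_or in Hg. destruct Hg; auto. Qed.

Section MCSprops.
Variable M : F -> Prop.
Hypothesis HM : MCS M.

Lemma mcs_closed l phi : (forall g, In g l -> M g) -> thm (Imp (conj p0 l) phi) -> M phi.
Proof.
  intros Hl Ht. destruct HM as [C Mx]. apply Mx. intros Hn0. assert (Hn : ~ cons_ (fun x => M x \/ x = phi)) by (intro Z; exact (Z Hn0)).
  destruct (incons_add M phi Hn) as [l2 [H1 H2]].
  apply C. exists (l ++ l2). split. { apply subl_app; auto. }
  eapply mp3; [|exact (conj_app l l2)|exact Ht|exact H2]. taut.
Qed.

Lemma mcs_thm phi : thm phi -> M phi.
Proof. intros H. apply (mcs_closed []); [simpl; tauto|]. eapply mp1; [|exact H]. taut. Qed.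

Lemma mcs_max phi : M phi \/ M (Neg phi).
Proof.
  destruct HM as [C Mx].
  destruct (classic (M phi)) as [|n1]; auto.
  destruct (classic (M (Neg phi))) as [|n2]; auto. exfalso.
  assert (A1 : ~ cons_ (fun x => M x \/ x = phi)) by (intro; apply n1; auto).
  assert (A2 : ~ cons_ (fun x => M x \/ x = Neg phi)) by (intro; apply n2; auto).
  destruct (incons_add _ _ A1) as [l1 [H1 H2]].
  destruct (incons_add _ _ A2) as [l3 [H3 H4]].
  apply C. exists (l1 ++ l3). split. { apply subl_app; auto. }
  eapply mp3; [|exact (conj_app l1 l3)|exact H2|exact H4]. taut.
Qed.

Lemma mcs_neg a : M (Neg a) <-> ~ M a.
Proof.
  split.
  - intros H1 H2. destruct HM as [C _]. apply C. exists [a; Neg a]. split.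
    + intros g [Eg|[Eg|[]]]; subst g; auto.
    + apply ax_taut. simpl. taut.
  - intros H. destruct (mcs_max a); tauto.
Qed.

Lemma mcs_and a b : M (And a b) <-> M a /\ M b.
Proof.
  split.
  - intros H. split; apply (mcs_closed [And a b]); try (intros g [Eg|[]]; subst g; auto);
      apply ax_taut; simpl; taut.
  - intros [H1 H2]. apply (mcs_closed [a; b]). { intros g [Eg|[Eg|[]]]; subst g; auto. }
    apply ax_taut; simpl; taut.
Qed.
End MCSprops.

Lemma chain_list (X : F -> Prop) (Fm : (F -> Prop) -> Prop) l :
  classical_sets.total_on Fm classical_sets.subset ->
  (forall g, In g l -> X g \/ exists Y, Fm Y /\ Y g) ->
  (forall g, In g l -> X g) \/ exists Y, Fm Y /\ forall g, In g l -> X g \/ Y g.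
Proof.
  intros Tot. induction l as [|a l IH]; intros H.
  - left; simpl; tauto.
  - destruct IH as [IH|[Y [FY HY]]]. { intros g Hg; apply H; simpl; auto. }
    + destruct (H a (or_introl eq_refl)) as [Xa|[Y [FY Ya]]].
      * left. intros g [Eg|Hg]; [subst g|]; auto.
      * right. exists Y. split; auto. intros g [Eg|Hg]; [subst g|]; auto.
    + destruct (H a (or_introl eq_refl)) as [Xa|[Z [FZ Za]]].
      * right. exists Y. split; auto. intros g [Eg|Hg]; [subst g|]; auto.
      * destruct (Tot Y Z FY FZ) as [YZ|ZY].
        -- right. exists Z. split; auto. intros g [Eg|Hg]; [subst g|]; auto.
           destruct (HY g Hg); auto.
        -- right. exists Y. split; auto. intros g [Eg|Hg]; [subst g|]; auto.
Qed.

Lemma lindenbaum (X : F -> Prop) : cons_ X -> exists M, MCS M /\ forall x, X x -> M x.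
Proof.
  intros CX.
  destruct (@classical_sets.Zorn_bigcup F (fun Y : F -> Prop => cons_ (fun x => X x \/ Y x))) as [A [PA MaxA]].
  - intros Fm Sub Tot [l [H1 H2]].
    destruct (chain_list X Fm l Tot) as [H|[Y [FY HY]]].
    + intros g Hg. destruct (H1 g Hg) as [Xg|[Y FY Yg]]; auto. right; exists Y; auto.
    + apply CX. exists l; auto.
    + apply (Sub Y FY). exists l. split; auto.
  - exists (fun x => X x \/ A x). split; [split|].
    + exact PA.
    + intros phi C. apply NNPP. intros Hn.
      apply (MaxA (fun x => A x \/ x = phi)).
      * split. { intros t At; left; exact At. }
        intros Hs. apply Hn; right; exact (Hs phi (or_intror eq_refl)).
      * eapply cons_mono; [|exact C]. simpl. intros x [Xx|[Ax|Ex]]; auto.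
    + intros x Xx; auto.
Qed.


Definition bdec (A : Prop) : bool := if excluded_middle_informative A then true else false.
Lemma bdec_true (A : Prop) : bdec A = true <-> A.
Proof. unfold bdec. destruct (excluded_middle_informative A); split; intros; auto; discriminate. Qed.

Section Sound.
Variables (S : Type) (R1 R2 : S -> S -> Prop) (V : P -> S -> Prop).
Hypothesis Hrefl : reflexive R1 \/ reflexive R2.
Notation sat := (sat R1 R2 V).

Lemma sat_Imp s a b : sat s (Imp a b) <-> (sat s a -> sat s b).
Proof. unfold Imp; simpl. split; intros; [apply NNPP|]; tauto. Qed.
Lemma sat_Iff s a b : sat s (Iff a b) <-> (sat s a <-> sat s b).
Proof. unfold Iff, Imp; simpl. split; [intros [H1 H2]; split; intros; apply NNPP; tauto|tauto]. Qed.
Lemma sat_Or s a b : sat s (Or a b) <-> (sat s a \/ sat s b).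
Proof. unfold Or; simpl. split; intros; [apply NNPP|]; tauto. Qed.

Lemma beval_sat s phi :
  beval (fun p => bdec (V p s)) (fun q => bdec (sat s q)) phi = true <-> sat s phi.
Proof.
  induction phi as [p|a IH|a IHa b IHb|a IH]; simpl.
  - apply bdec_true.
  - rewrite <- IH. destruct (beval _ _ a); simpl; split; intros H; try discriminate.
    + exfalso; apply H; reflexivity.
    + reflexivity.
  - rewrite <- IHa, <- IHb. destruct (beval _ _ a), (beval _ _ b); simpl; split; intros H;
      try destruct H; try discriminate; auto.
  - apply (bdec_true (sat s (Dot a))).
Qed.

Lemma soundness_thm phi : thm phi -> forall s, sat s phi.
Proof.
  induction 1; intros s.
  - apply beval_sat. apply H.
  - simpl. intros. tauto.
  - apply sat_Iff. simpl. split; intros H t u Ht Hu; specialize (H t u Ht Hu); tauto.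
  - apply sat_Imp. simpl. intros [H1 H2] t u Ht Hu.
    specialize (H1 t u Ht Hu); specialize (H2 t u Ht Hu); tauto.
  - apply sat_Imp. intros H. apply sat_Or.
    destruct (classic (exists t0, R1 s t0)) as [[t0 Ht0]|N1];
      [|left; simpl; intros t u Ht; exfalso; eauto].
    destruct (classic (exists u0, R2 s u0)) as [[u0 Hu0]|N2];
      [|left; simpl; intros t u Ht Hu; exfalso; eauto].
    simpl in H.
    destruct (classic (sat u0 phi)) as [Y|N].
    + left. intros t u Ht Hu. rewrite !sat_Or.
      assert (sat t phi) by (apply (H t u0 Ht Hu0); auto).
      assert (sat u phi) by (apply (H t0 u Ht0 Hu); apply (H t0 u0 Ht0 Hu0); auto).
      tauto.
    + right. intros t u Ht Hu. rewrite !sat_Or. simpl.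
      assert (~ sat t phi) by (rewrite (H t u0 Ht Hu0); auto).
      assert (~ sat u phi) by (rewrite <- (H t0 u Ht0 Hu); rewrite (H t0 u0 Ht0 Hu0); auto).
      tauto.
  - rewrite !sat_Imp. intros Hs Hd Hi. intros t u Ht Hu.
    assert (At : sat t phi /\ sat u phi).
    { destruct Hrefl as [Rf|Rf].
      - assert (sat u phi) by (apply (Hd s u (Rf s) Hu); auto).
        split; auto. apply (Hd t u Ht Hu); auto.
      - assert (sat t phi) by (apply (Hd t s Ht (Rf s)); auto).
        split; auto. apply (Hd t u Ht Hu); auto. }
    specialize (Hi t u Ht Hu). rewrite !sat_Imp in Hi. tauto.
  - specialize (IHKTthm1 s). specialize (IHKTthm2 s). rewrite sat_Imp in IHKTthm1. auto.
  - apply sat_Iff. simpl.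
    assert (E : forall x, sat x phi <-> sat x psi) by (intros x; apply sat_Iff; auto).
    split; intros K t u Ht Hu; specialize (K t u Ht Hu).
    + rewrite <- (E t), <- (E u); exact K.
    + rewrite (E t), (E u); exact K.
Qed.
End Sound.

Lemma sat_conj {S} (R1 R2 : S -> S -> Prop) V s l :
  (forall g, In g l -> sat R1 R2 V s g) -> sat R1 R2 V s (conj p0 l).
Proof.
  induction l as [|a l IH]; intros H; simpl.
  - tauto.
  - split; [apply H; simpl; auto|apply IH; intros; apply H; simpl; auto].
Qed.

Lemma soundness G phi : KTderives p0 G phi -> sem_conseq one_reflexive G phi.
Proof.
  intros [l [Hl Ht]] S R1 R2 V s C HG.
  pose proof (soundness_thm S R1 R2 V C _ Ht s) as H.
  rewrite sat_Imp in H. apply H. apply sat_conj. intros g Hg; apply HG, Hl, Hg.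
exact C. Qed.

Lemma nec a : thm a -> thm (Dot a).
Proof.
  intros H. assert (H1 : thm (Iff a (Top p0))) by (eapply mp1; [|exact H]; taut).
  pose proof (rule_RE H1) as H2.
  eapply mp2; [|exact H2|exact (ax_top p0)]. taut.
Qed.

Definition CS := {M : F -> Prop | MCS M}.
Definition CR (s t : CS) : Prop :=
  forall phi, proj1_sig s (And phi (Dot phi)) -> proj1_sig t phi.
Definition CV (p : P) (s : CS) : Prop := proj1_sig s (Var p).

Lemma CR_refl s : CR s s.
Proof. intros phi H. destruct s as [M HM]; simpl in *. apply (mcs_and M HM) in H. tauto. Qed.

Lemma box_conj M (HM : MCS M) l : (forall g, In g l -> M (And g (Dot g))) ->
  M (conj p0 l) /\ M (Dot (conj p0 l)).
Proof.
  induction l as [|a l IH]; intros H; simpl.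
  - split.
    + apply (mcs_thm M HM). apply ax_taut. taut.
    + apply (mcs_thm M HM). apply ax_top.
  - destruct IH as [I1 I2]. { intros g Hg; apply H; simpl; auto. }
    assert (Ha := H a (or_introl eq_refl)). apply (mcs_and M HM) in Ha. destruct Ha as [A1 A2].
    split.
    + apply (mcs_and M HM); auto.
    + apply (mcs_closed M HM [Dot a; Dot (conj p0 l)]).
      { intros g [Eg|[Eg|[]]]; subst g; auto. }
      eapply mp1; [|exact (ax_and p0 a (conj p0 l))]. taut.
Qed.

Lemma exists_succ (s : CS) b : ~ proj1_sig s (Dot b) ->
  exists t : CS, CR s t /\ proj1_sig t (Neg b).
Proof.
  destruct s as [M HM]; simpl. intros ND.
  destruct (lindenbaum (fun x => M (And x (Dot x)) \/ x = Neg b)) as [N [HN Sub]].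
  - intros Hc. assert (Hn : ~ cons_ (fun x => M (And x (Dot x)) \/ x = Neg b))
      by (intro Z; exact (Z Hc)).
    destruct (incons_add _ _ Hn) as [l [Hl Ht]].
    set (c := conj p0 l) in *.
    assert (Hcb : thm (Imp c b)) by (eapply mp1; [|exact Ht]; taut).
    destruct (box_conj M HM l Hl) as [Mc Mdc].
    assert (Mi : M (Dot (Imp c b))) by (apply (mcs_thm M HM); apply nec; exact Hcb).
    apply ND. apply (mcs_closed M HM [c; Dot c; Dot (Imp c b)]).
    { intros g [Eg|[Eg|[Eg|[]]]]; subst g; auto. }
    eapply mp1; [|exact (ax_T p0 c b)]. taut.
  - exists (exist _ N HN). split.
    + intros phi H. simpl. apply Sub. left. exact H.
    + simpl. apply Sub. right. reflexivity.
Qed.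

Lemma dot_neg M (HM : MCS M) a : M (Dot a) <-> M (Dot (Neg a)).
Proof.
  split; intros H.
  - apply (mcs_closed M HM [Dot a]). { intros g [Eg|[]]; subst g; auto. }
    eapply mp1; [|exact (ax_neg p0 a)]. taut.
  - apply (mcs_closed M HM [Dot (Neg a)]). { intros g [Eg|[]]; subst g; auto. }
    eapply mp1; [|exact (ax_neg p0 a)]. taut.
Qed.

Lemma truth phi : forall s : CS, sat CR CR CV s phi <-> proj1_sig s phi.
Proof.
  induction phi as [p|a IH|a IHa b IHb|a IH]; intros s; simpl.
  - reflexivity.
  - rewrite IH. destruct s as [M HM]; simpl. symmetry. apply mcs_neg; auto.
  - rewrite IHa, IHb. destruct s as [M HM]; simpl. symmetry. apply mcs_and; auto.
  - assert (Key : forall t u, (sat CR CR CV t a <-> sat CR CR CV u a) <->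
                             (proj1_sig t a <-> proj1_sig u a))
      by (intros t u; rewrite (IH t), (IH u); reflexivity).
    split.
    + intros H. apply NNPP. intros ND.
      pose proof (proj2_sig s) as HM. simpl in HM.
      destruct (classic (proj1_sig s a)) as [Ma|Na].
      * destruct (exists_succ s a ND) as [t [Ht Hta]].
        specialize (H s t (CR_refl s) Ht). rewrite Key in H.
        destruct t as [N HN]; simpl in *.
        apply (mcs_neg N HN a) in Hta. tauto.
      * assert (ND' : ~ proj1_sig s (Dot (Neg a))) by (rewrite <- (dot_neg _ HM a); exact ND).
        destruct (exists_succ s (Neg a) ND') as [t [Ht Hta]].
        specialize (H s t (CR_refl s) Ht). rewrite Key in H.
        destruct t as [N HN]; simpl in *.
        apply (mcs_neg N HN) in Hta. rewrite (mcs_neg N HN a) in Hta. tauto.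
    + intros HD.
      assert (Cl : forall t, CR s t -> (proj1_sig t a <-> proj1_sig s a)).
      { intros t Ht. destruct s as [M HM]; destruct t as [N HN]; simpl in *.
        unfold CR in Ht; simpl in Ht.
        destruct (classic (M a)) as [Ma|Na].
        - assert (N a) by (apply Ht; apply (mcs_and M HM); auto). tauto.
        - assert (Mn : M (Neg a)) by (apply (mcs_neg M HM); auto).
          assert (N (Neg a)).
          { apply Ht; apply (mcs_and M HM); split; auto. apply (proj1 (dot_neg M HM a)); auto. }
          apply (mcs_neg N HN) in H. tauto. }
      intros t u Ht Hu. rewrite Key. rewrite (Cl t Ht), (Cl u Hu). reflexivity.
Qed.

Lemma completeness G phi : sem_conseq both_reflexive G phi -> KTderives p0 G phi.
Proof.
  intros Hs. apply NNPP. intros ND.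
  destruct (lindenbaum (fun x => G x \/ x = Neg phi)) as [M [HM Sub]].
  - intros [l [Hl Ht]]. destruct (split_list G (Neg phi) l Hl) as [l' [H1 H2]].
    apply ND. exists l'. split; auto. eapply mp2; [|exact H2|exact Ht]. taut.
  - set (s := exist _ M HM : CS).
    assert (Hp : sat CR CR CV s phi).
    { apply Hs. { split; intros x; apply CR_refl. }
      intros g Hg. apply truth. simpl. apply Sub. left. exact Hg. }
    apply truth in Hp. simpl in Hp.
    apply (mcs_neg M HM phi). { apply Sub. right. reflexivity. } exact Hp.
Qed.

End Proof.

Theorem mainTheorem12 (P : Type) (p0 : P) :
  sound_strongly_complete p0 both_reflexive /\
  sound_strongly_complete p0 one_reflexive.
Proof.
  split; intros G phi; split.
  - intros H S R1 R2 V s [Hr _] HG. apply (soundness p0 G phi H); auto. left; exact Hr.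
  - apply completeness.
  - apply soundness.
  - intros H. apply completeness. intros S R1 R2 V s [Hr _] HG. apply H; auto. left; exact Hr.
Qed.
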